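(* Let $G$ be a locally compact (Hausdorff) topological group. Then $G$ is approximable by finite $l$-quasigroups, and likewise $G$ is approximable by finite $r$-quasigroups.
   Context: A (finite) $l$-quasigroup is a set $H$ with a binary operation $\odot$ such that for all $a,b\in H$ the equation $a\odot x=b$ has a unique solution $x\in H$; an $r$-quasigroup is defined in the same way with the equation $x\odot a=b$. Approximability: let $C\subseteq G$ be compact, $U$ a neighborhood of the unit of $G$, and $(H,\odot)$ a finite algebra (a set with one binary operation). A set $M\subseteq G$ is a $U$-grid of $C$ if $C\subseteq MU=\{mu: m\in M,u\in U\}$. A map $j:H\to G$ is a $(C,U)$-homomorphism if for all $x,y\in H$ with $j(x),j(y),j(x)j(y)\in C$ one has $j(x\odot y)\in j(x)j(y)U$. The pair $(H,j)$ is a $(C,U)$-approximation of $G$ if $j(H)$ is a $U$-grid of $C$ and $j$ is a $(C,U)$-homomorphism. For a class $\mathcal K$ of finite algebras, $G$ is approximable by systems of $\mathcal K$ if for every compact $C\subseteq G$ and every neighborhood $U$ of the unit there is a $(C,U)$-approximation $(H,j)$ of $G$ with $H\in\mathcal K$ and $j$ injective. *)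

(* Defs.v *)
From HB Require Import structures.
From mathcomp Require Import all_boot all_algebra.
From mathcomp Require Import all_classical all_reals topology.
Set Implicit Arguments. Unset Strict Implicit. Unset Printing Implicit Defensive.
Local Open Scope classical_set_scope.

Definition is_topological_group (T : topologicalType)
    (mul : T -> T -> T) (inv : T -> T) (one : T) : Prop :=
  [/\ (forall x y z, mul x (mul y z) = mul (mul x y) z),
      (forall x, mul one x = x /\ mul x one = x),
      (forall x, mul (inv x) x = one /\ mul x (inv x) = one),
      continuous (fun p : T * T => mul p.1 p.2) &
      continuous inv].

Definition l_quasigroup (H : finType) (op : H -> H -> H) : Prop :=
  forall a b : H, exists! x : H, op a x = b.

Definition r_quasigroup (H : finType) (op : H -> H -> H) : Prop :=
  forall a b : H, exists! x : H, op x a = b.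

Section Approx.
Variables (T : topologicalType) (mul : T -> T -> T) (one : T).

Definition setmul (M U : set T) : set T :=
  [set z | exists m u, [/\ M m, U u & z = mul m u]].

Definition is_grid (U C M : set T) : Prop := C `<=` setmul M U.

Definition CU_hom (C U : set T) (H : finType) (op : H -> H -> H)
    (j : H -> T) : Prop :=
  forall x y : H, C (j x) -> C (j y) -> C (mul (j x) (j y)) ->
    setmul [set mul (j x) (j y)] U (j (op x y)).

Definition CU_approximation (C U : set T) (H : finType) (op : H -> H -> H)
    (j : H -> T) : Prop :=
  is_grid U C (range j) /\ CU_hom C U op j.

Definition approximable_by (K : forall H : finType, (H -> H -> H) -> Prop)
    : Prop :=
  forall C : set T, compact C -> forall U : set T, nbhs one U ->
    exists (H : finType) (op : H -> H -> H) (j : H -> T),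
      [/\ K H op, injective j & CU_approximation C U op j].
End Approx.

(* Main.v *)
From mathcomp Require Import all_boot.
Set Implicit Arguments. Unset Strict Implicit. Unset Printing Implicit Defensive.

Section Hall.
Variable T : finType.

Definition nbr (R : T -> T -> bool) (S : {set T}) : {set T} :=
  [set z | [exists y in S, R y z]].

Lemma nbrU R (S1 S2 : {set T}) : nbr R (S1 :|: S2) = nbr R S1 :|: nbr R S2.
Proof.
apply/setP => z; rewrite !inE; apply/existsP/orP.
  by case=> y /andP[]; rewrite inE => /orP[] ? ?; [left|right]; apply/existsP; exists y; apply/andP.
by case=> /existsP[y /andP[yS Ryz]]; exists y; rewrite inE yS ?orbT.
Qed.

Lemma nbrS R (S1 S2 : {set T}) : S1 \subset S2 -> nbr R S1 \subset nbr R S2.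
Proof.
move=> sS; apply/subsetP => z; rewrite !inE => /existsP[y /andP[yS Ryz]].
by apply/existsP; exists y; rewrite (subsetP sS).
Qed.

Lemma hall_gen n : forall (A : {set T}) (R : T -> T -> bool), #|A| <= n ->
  (forall S : {set T}, S \subset A -> #|S| <= #|nbr R S|) ->
  exists f : T -> T, {in A &, injective f} /\ {in A, forall x, R x (f x)}.
Proof.
elim: n => [|n IH] A R.
  rewrite leqn0 cards_eq0 => /eqP -> _; exists id; split; by move=> x; rewrite inE.
move=> cA hc.
case: (boolP [exists S : {set T}, [&& S \subset A, S != set0, S != A & #|nbr R S| <= #|S|]]).
  case/existsP => S /and4P[sSA S0 SA tight].
  have ltS : #|S| <= n.
    by rewrite -ltnS (leq_trans _ cA) // proper_card // properEneq SA.
  have [f1 [inj1 R1]] := IH S R ltS (fun S' s => hc S' (subset_trans s sSA)).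
  pose R2 := fun x z => R x z && (z \notin nbr R S).
  have ltA : #|A :\: S| <= n.
    rewrite -ltnS (leq_trans _ cA) // cardsDS // ltn_subrL lt0n cards_eq0 S0 /=.
    by rewrite (leq_trans _ (subset_leq_card sSA)) // lt0n cards_eq0.
  have hc2 : forall S' : {set T}, S' \subset A :\: S -> #|S'| <= #|nbr R2 S'|.
    move=> S' sS'.
    have dis : S' :&: S = set0.
      by apply/setP => x; rewrite !inE; apply/negbTE/negP => /andP[/(subsetP sS')]; rewrite !inE => /andP[/negPf ->].
    have sub : S' :|: S \subset A by rewrite subUset sSA (subset_trans sS') // subsetDl.
    have h := hc (S' :|: S) sub.
    rewrite cardsU dis ?cards0 subn0 nbrU in h.
    have e : nbr R2 S' = nbr R S' :\: nbr R S.
      apply/setP => z; rewrite /nbr /R2 !inE; apply/existsP/andP.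
        by case=> y /andP[yS /andP[Ryz nz]]; split=> //; apply/existsP; exists y; rewrite yS.
      by case=> nz /existsP[y /andP[yS Ryz]]; exists y; rewrite yS Ryz.
    rewrite e; rewrite -(leq_add2r #|S|) (leq_trans h) //.
    rewrite -(cardsID (nbr R S) (nbr R S' :|: nbr R S)) setIUl setIid.
    rewrite setDUl setDv setU0 addnC leq_add2l (leq_trans _ tight) //.
    by apply: subset_leq_card; rewrite subUset subsetIr subxx.
  have [f2 [inj2 R2f]] := IH (A :\: S) R2 ltA hc2.
  exists (fun x => if x \in S then f1 x else f2 x); split.
    move=> x y xA yA /=.
    case: ifP => xS; case: ifP => yS.
    - exact: inj1.
    - move=> e; have := R2f y; rewrite !inE yS yA /= => /(_ isT) /andP[_ /negP []].
      by rewrite -e /nbr inE; apply/existsP; exists x; rewrite xS R1.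
    - move=> e; have := R2f x; rewrite !inE xS xA /= => /(_ isT) /andP[_ /negP []].
      by rewrite e /nbr inE; apply/existsP; exists y; rewrite yS R1.
    - by apply: inj2; rewrite !inE ?xS ?yS.
  move=> x xA /=; case: ifP => xS; first exact: R1.
  by have := R2f x; rewrite !inE xS xA => /(_ isT) /andP[].
rewrite negb_exists => /forallP strict.
case: (set_0Vmem A) => [-> | [x0 x0A]].
  by exists id; split; move=> x; rewrite inE.
have : 0 < #|nbr R [set x0]| by rewrite (leq_trans _ (hc _ _)) ?cards1 // sub1set.
rewrite card_gt0 => /set0Pn[y0]; rewrite inE => /existsP[x00 /andP[]]; rewrite inE => /eqP -> Ry0.
pose R' := fun x z => R x z && (z != y0).
have ltA : #|A :\ x0| <= n by rewrite -ltnS (leq_trans _ cA) // (cardsD1 x0 A) x0A.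
have hc' : forall S : {set T}, S \subset A :\ x0 -> #|S| <= #|nbr R' S|.
  move=> S sS; case: (set_0Vmem S) => [-> | [x1 x1S]]; first by rewrite cards0.
  have := strict S; rewrite (subset_trans sS) ?subD1set //=.
  have -> : (S != set0) by apply/set0Pn; exists x1.
  have -> /= : S != A by apply/eqP => eSA; have := subsetP sS x0; rewrite eSA x0A !inE eqxx => /(_ isT).
  rewrite -ltnNge => lt.
  have : nbr R S :\ y0 \subset nbr R' S.
    apply/subsetP => z; rewrite !inE => /andP[nz /existsP[y /andP[yS Ryz]]].
    by apply/existsP; exists y; rewrite yS /R' Ryz nz.
  move/subset_leq_card; apply: leq_trans.
  have := cardsD1 y0 (nbr R S); case: (y0 \in nbr R S) => /= e; last by move: lt; rewrite e ?add0n => /ltnW.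
  by move: lt; rewrite e ?add1n ltnS.
have [f2 [inj2 R2f]] := IH (A :\ x0) R' ltA hc'.
exists (fun x => if x == x0 then y0 else f2 x); split.
  move=> x y xA yA /=.
  case: eqP => ex; case: eqP => ey; first by rewrite ex ey.
  - move=> e; have := R2f y; rewrite !inE yA; move/eqP: ey => ->; move=> /(_ isT) /andP[_]; by rewrite e eqxx.
  - move=> e; have := R2f x; rewrite !inE xA; move/eqP: ex => ->; move=> /(_ isT) /andP[_]; by rewrite e eqxx.
  - by apply: inj2; rewrite !inE ?xA ?yA; apply/andP; split => //; apply/eqP.
move=> x xA /=; case: eqP => [-> //|/eqP nx].
by have := R2f x; rewrite !inE nx xA => /(_ isT) /andP[].
Qed.


Lemma nbrE R S z : (z \in nbr R S) = [exists y in S, R y z].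
Proof. by rewrite inE. Qed.

Lemma hall_full (R : T -> T -> bool) :
  (forall S : {set T}, #|S| <= #|nbr R S|) ->
  exists f : T -> T, injective f /\ forall x, R x (f x).
Proof.
move=> hc; have [f [finj fR]] := @hall_gen #|[set: T]| [set: T] R (leqnn _) (fun S _ => hc S).
exists f; split; first by move=> x y e; apply: finj; rewrite ?inE.
by move=> x; apply: fR; rewrite inE.
Qed.

Lemma hall_bad (R : T -> T -> bool) (S : {set T}) y :
  y \in S -> (forall z, R y z) -> #|S| <= #|nbr R S|.
Proof.
move=> yS hy; have -> : nbr R S = [set: T].
  by apply/setP => z; rewrite !inE; apply/existsP; exists y; rewrite yS hy.
by rewrite cardsT max_card.
Qed.

Lemma hall_count (R : T -> T -> bool) (S : {set T}) :
  #|nbr R S| < #|S| -> #|T| < #|{: ({y | y \in S} + {z | z \notin nbr R S})%type}|.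
Proof.
move=> lt; rewrite card_sum !card_sig.
have e1 : #|[pred x | x \in S]| = #|S| by apply: eq_card.
have e2 : #|[pred x | x \notin nbr R S]| = #|T| - #|nbr R S|.
  by rewrite -(cardsC (nbr R S)) addKn; apply: eq_card => x; rewrite !inE.
rewrite e1 e2.
have := max_card (mem (nbr R S)).
move: lt; set p := #|S|; set q := #|nbr R S|; set r := #|T|.
move=> lt qr; rewrite addnBA // ltn_subRL ltn_add2r.
exact: lt.
Qed.

End Hall.

From HB Require Import structures.
From mathcomp Require Import all_boot all_algebra.
From mathcomp Require Import all_classical all_reals topology.
Require Import Defs.
Set Implicit Arguments. Unset Strict Implicit. Unset Printing Implicit Defensive.
Local Open Scope classical_set_scope.

Section Core.
Variables (G : topologicalType) (mul : G -> G -> G) (inv : G -> G) (one : G).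
Hypothesis HG : is_topological_group mul inv one.

Let mA : forall x y z, mul x (mul y z) = mul (mul x y) z. Proof. by case: HG. Qed.
Let m1 : forall x, mul one x = x. Proof. by case: HG => _ h _ _ _ x; case: (h x). Qed.
Let m1r : forall x, mul x one = x. Proof. by case: HG => _ h _ _ _ x; case: (h x). Qed.
Let mV : forall x, mul (inv x) x = one. Proof. by case: HG => _ _ h _ _ x; case: (h x). Qed.
Let mVr : forall x, mul x (inv x) = one. Proof. by case: HG => _ _ h _ _ x; case: (h x). Qed.
Let mulc : continuous (fun p : G * G => mul p.1 p.2). Proof. by case: HG. Qed.
Let invc : continuous inv. Proof. by case: HG. Qed.

Lemma mulKV a p : mul (inv a) (mul a p) = p.
Proof. by rewrite mA mV m1. Qed.
Lemma mulVK a p : mul a (mul (inv a) p) = p.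
Proof. by rewrite mA mVr m1. Qed.
Lemma inv_uniq z w : mul z w = one -> z = inv w.
Proof. by move=> e; rewrite -[z]m1r -(mVr w) mA e m1. Qed.
Lemma invK x : inv (inv x) = x.
Proof. by apply/esym/inv_uniq; rewrite mVr. Qed.
Lemma inv_one : inv one = one.
Proof. by apply/esym/inv_uniq; rewrite m1. Qed.
Lemma inv_mul a b : inv (mul a b) = mul (inv b) (inv a).
Proof. by apply/esym/inv_uniq; rewrite -mA mulKV mV. Qed.
Lemma cancelL a p q : mul (inv (mul a p)) (mul a q) = mul (inv p) q.
Proof. by rewrite inv_mul -mA mulKV. Qed.

Lemma mul_cvg (T : Type) (F : set_system T) {FF : Filter F} (f g : T -> G) a b :
  f @ F --> a -> g @ F --> b -> (fun t => mul (f t) (g t)) @ F --> mul a b.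
Proof.
move=> fa gb; apply: (cvg_comp2 (h := mul)) fa gb _.
move=> P hP; exact: (@mulc (a, b) P hP).
Qed.

Lemma inv_cvg (T : Type) (F : set_system T) {FF : Filter F} (f : T -> G) a :
  f @ F --> a -> (fun t => inv (f t)) @ F --> inv a.
Proof. move=> fa P hP; exact: (fa _ (@invc a P hP)). Qed.

Lemma box (x y : G) (P : set (G * G)) : nbhs (x, y) P ->
  exists2 A, nbhs x A & exists2 B, nbhs y B & forall a b, A a -> B b -> P (a, b).
Proof.
case=> [[A B]] /= [nA nB] sub; exists A => //; exists B => // a b Aa Bb.
exact: (sub (a, b)).
Qed.

Variable U : set G.
Hypothesis nU : nbhs one U.

Definition V := [set x | U x /\ U (inv x)].

Lemma nV : nbhs one V.
Proof.
apply: filterI => //.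
have h := @invc one U; rewrite inv_one in h; exact: h.
Qed.

Lemma V1 : V one.
Proof. exact: nbhs_singleton nV. Qed.

Lemma Vsym x : V x -> V (inv x).
Proof. by case=> a b; split; rewrite ?invK. Qed.

Lemma VU x : V x -> U x.
Proof. by case. Qed.

Definition sep (T : finType) (k : T -> G) :=
  forall s t, s <> t -> ~ V (mul (inv (k s)) (k t)).

Variable C : set G.
Hypothesis cC : compact C.

Lemma sep_bound : exists N, forall (T : finType) (k : T -> G),
  (forall t, C (k t)) -> sep k -> #|T| <= N.
Proof.
have cv : (fun q : G * G => mul (inv q.1) q.2) @ nbhs (one, one) --> mul (inv one) one.
  apply: mul_cvg; first apply: inv_cvg; [exact: cvg_fst | exact: cvg_snd].
rewrite mV in cv.
have [A nA [B nB AB]] := box (cv V nV).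
have nW : nbhs one (A `&` B) by apply: filterI.
move: nW; rewrite nbhsE => -[W0 [oW0 W01] W0sub].
pose O x := (fun y => mul (inv x) y) @^-1` W0.
have oO : forall x, open (O x).
  move=> x; apply: open_comp => // y _.
  apply: mul_cvg; [exact: cvg_cst | exact: cvg_id].
pose Fs := filter_from [set: seq G] (fun s0 => [set s : seq G | {subset s0 <= s}]).
have FF : Filter Fs.
  apply: filter_from_filter; first by exists [::].
  move=> s1 s2 _ _; exists (s1 ++ s2) => //.
  move=> s /= h; split => y yi; apply: h; by rewrite mem_cat yi ?orbT.
have := (iffLR (compact_near_coveringP C)) cC (seq G) Fs
  (fun s y => exists2 x, x \in s & O x y) FF.
case.
  move=> x Cx; exists (O x, [set s | x \in s]).
    split; first by apply: open_nbhs_nbhs; split; [exact: oO | rewrite /O /= mV].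
    by exists [:: x] => // s /= h; apply: h; rewrite inE.
  by case=> y s [/= Oy xs]; exists x.
move=> s0 _ cov.
pose s := s0.
have cov' : forall y, C y -> exists2 x, x \in s & O x y.
  by move=> y Cy; apply: (cov s0) => //.
exists (size s) => T k Ck sk.
have hc : forall t, {x | x \in s /\ O x (k t)}.
  move=> t; apply: cid; have [x Dx Ox] := cov' _ (Ck t).
  by exists x; split.
pose c t := proj1_sig (hc t).
have cs : forall t, index (c t) s < size s.
  by move=> t; rewrite index_mem; case: (proj2_sig (hc t)).
pose f t : 'I_(size s) := Ordinal (cs t).
have finj : injective f.
  move=> t1 t2 /(congr1 val) /= e.
  have e' : c t1 = c t2.
    have h1 : c t1 \in s := proj1 (proj2_sig (hc t1)).
    have h2 : c t2 \in s := proj1 (proj2_sig (hc t2)).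
    by rewrite -(nth_index (c t1) h1) -[in RHS](nth_index (c t1) h2) e.
  apply: contrapT => ne; apply: (sk _ _ ne).
  have O1 := proj2 (proj2_sig (hc t1)); have O2 := proj2 (proj2_sig (hc t2)).
  rewrite -/(c t1) in O1; rewrite -/(c t2) -e' in O2.
  have := AB _ _ (proj1 (W0sub _ O1)) (proj2 (W0sub _ O2)).
  by rewrite /= cancelL.
by have := leq_card f finj; rewrite card_ord.
Qed.


Definition goodP n := exists (T : finType) (k : T -> G),
  #|T| = n /\ (forall t, C (k t)) /\ sep k.

Lemma exists_max : exists (T : finType) (k : T -> G),
  [/\ (forall t, C (k t)), sep k & forall (T' : finType) (k' : T' -> G),
    (forall t, C (k' t)) -> sep k' -> #|T'| <= #|T| ].
Proof.
have [N hN] := sep_bound.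
pose P := fun n => `[< goodP n >].
have ex : exists n, P n.
  exists 0; apply/asboolP; exists 'I_0, (fun _ => one); split; first by rewrite card_ord.
  by split; case.
have bd : forall n, P n -> n <= N.
  by move=> n /asboolP [T [k [<- [Ck sk]]]]; exact: hN.
case: (ex_maxnP ex bd) => n /asboolP [T [k [eT [Ck sk]]]] mx.
exists T, k; split => // T' k' Ck' sk'.
rewrite eT; apply: mx; apply/asboolP; by exists T', k'.
Qed.

Lemma Vswap p q : V (mul (inv p) q) -> V (mul (inv q) p).
Proof. by move/Vsym; rewrite inv_mul invK. Qed.

Lemma l_core : exists (H : finType) (op : H -> H -> H) (j : H -> G),
  [/\ l_quasigroup op, injective j, (forall h, C (j h)),
      is_grid mul U C (range j) & CU_hom mul C U op j].
Proof.
have [T [k [Ck sk mx]]] := exists_max.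
have kinj : injective k.
  move=> s t e; apply: contrapT => ne; apply: (sk _ _ ne); rewrite e mV; exact: V1.
have row : forall a : G, exists f : T -> T, injective f /\
    forall y, C (k y) -> C (mul a (k y)) -> V (mul (inv (mul a (k y))) (k (f y))).
  move=> a.
  pose R := fun y z => `[< C (k y) -> C (mul a (k y)) -> V (mul (inv (mul a (k y))) (k z)) >].
  have [|f [finj fR]] := @hall_full _ R; last first.
    exists f; split => // y Cy Cay; have /asboolP h := fR y; exact: h Cy Cay.
  move=> S.
  case: (pselect (forall y, y \in S -> C (k y) /\ C (mul a (k y)))) => [good | bad]; last first.
    have [y [yS nb]] : exists y, y \in S /\ ~ (C (k y) /\ C (mul a (k y))).
      apply: contrapT => h; apply: bad => y yS; apply: contrapT => nb; apply: h; by exists y.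
    apply: (hall_bad yS) => z; apply/asboolP => Cy Cay; exfalso; exact: nb.
  rewrite leqNgt; apply/negP => lt.
  have := hall_count lt; rewrite ltnNge; move/negP; apply.
  pose k' : ({y | y \in S} + {z | z \notin nbr R S})%type -> G := fun w => match w with
    | inl y => mul a (k (val y)) | inr z => k (val z) end.
  have nR : forall y z, y \in S -> z \notin nbr R S ->
      ~ V (mul (inv (mul a (k y))) (k z)).
    move=> y z yS zn hv; move: zn; rewrite nbrE => /existsP; apply.
    exists y; rewrite yS /=; apply/asboolP => _ _; exact: hv.
  apply: (mx _ k').
  - by case=> [y|z] /=; [exact: (good _ (valP y)).2 | exact: Ck].
  - case=> [y1|z1] [y2|z2] /= ne.
    + rewrite cancelL; apply: sk => e; apply: ne; congr inl; exact: val_inj.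
    + exact: nR (valP y1) (valP z2).
    + by move/Vswap; exact: nR (valP y2) (valP z1).
    + apply: sk => e; apply: ne; congr inr; exact: val_inj.
have rowc : forall a : G, {f : T -> T | injective f /\
    forall y, C (k y) -> C (mul a (k y)) -> V (mul (inv (mul a (k y))) (k (f y)))}.
  by move=> a; apply: cid; exact: row.
pose op := fun x y => sval (rowc (k x)) y.
exists T, op, k; split => //.
- move=> a b; have [finj _] := svalP (rowc (k a)).
  have [g fg gf] := injF_bij finj.
  exists (g b); split; first by rewrite /op gf.
  by move=> x' e; apply: finj; rewrite /op in e; rewrite e gf.
- move=> c Cc.
  have [t Vt] : exists t, V (mul (inv (k t)) c).
    apply: contrapT => nc.
    have nc' : forall t, ~ V (mul (inv (k t)) c) by move=> t h; apply: nc; exists t.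
    pose k' : option T -> G := fun w => if w is Some t then k t else c.
    suff : #|{: option T}| <= #|T| by rewrite card_option ltnn.
    apply: (mx _ k').
    - by case=> [t|] /=; [exact: Ck | exact: Cc].
    - case=> [t1|] [t2|] /= ne.
      + apply: sk => e; apply: ne; congr Some; exact: e.
      + exact: nc'.
      + by move/Vswap; exact: nc'.
      + by case: ne.
  exists (k t), (mul (inv (k t)) c); split; [by exists t | exact: VU | by rewrite mulVK].
- move=> x y Cx Cy Cxy.
  have hV := (proj2 (svalP (rowc (k x)))) y Cy Cxy.
  exists (mul (k x) (k y)), (mul (inv (mul (k x) (k y))) (k (op x y))).
  split => //; [exact: VU | by rewrite mulVK].
Qed.

Lemma conj_unif : exists2 U', nbhs one U' &
  forall p, C p -> forall u, U' u -> U (mul (inv p) (mul u p)).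
Proof.
have hcov : forall x, C x ->
    \forall x' \near x & i \near nbhs one, U (mul (inv x') (mul i x')).
  move=> x Cx.
  have cv : (fun q : G * G => mul (inv q.1) (mul q.2 q.1)) @ nbhs (x, one)
      --> mul (inv x) (mul one x).
    apply: mul_cvg; first by apply: inv_cvg; exact: cvg_fst.
    apply: mul_cvg; [exact: cvg_snd | exact: cvg_fst].
  rewrite m1 mV in cv.
  have [A nA [B nB AB]] := box (cv U nU).
  exists (A, B) => //; case=> a b [/= Aa Bb]; exact: AB.
have := (iffLR (compact_near_coveringP C)) cC G (nbhs one)
  (fun u p => U (mul (inv p) (mul u p))) (nbhs_filter one) hcov.
move=> h; exists (fun u => forall p, C p -> U (mul (inv p) (mul u p))).
  by apply: filterS h => u hu p Cp; exact: hu.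
by move=> p Cp u hu; exact: hu.
Qed.

End Core.

Lemma opp_group (G : topologicalType) (mul : G -> G -> G) (inv : G -> G) (one : G) :
  is_topological_group mul inv one ->
  is_topological_group (fun x y => mul y x) inv one.
Proof.
move=> HG; have HG' := HG; case: HG' => mA m1 mV mc ic; split.
- by move=> x y z /=; rewrite mA.
- by move=> x; case: (m1 x) => a b; split.
- by move=> x; case: (mV x) => a b; split.
- case=> a b; apply: (mul_cvg HG); [exact: cvg_snd | exact: cvg_fst].
- exact: ic.
Qed.

Theorem theorem1 (G : topologicalType) (mul : G -> G -> G) (inv : G -> G)
    (one : G) :
  is_topological_group mul inv one ->
  hausdorff_space G ->
  locally_compact [set: G] ->
  approximable_by mul one l_quasigroup /\ approximable_by mul one r_quasigroup.
Proof.
move=> HG _ _; split.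
  move=> C cC U nU; have [H [op [j [lq ji _ gr hom]]]] := l_core HG nU cC.
  by exists H, op, j; split.
move=> C cC U nU.
have [U' nU' conj] := conj_unif HG nU cC.
have HG' := opp_group HG.
have [H [op [j [lq ji Cj gr hom]]]] := l_core HG' nU' cC.
exists H, (fun x y => op y x), j; split => //; split.
- move=> c Cc; have [m [u [[h _ <-] U'u ->]]] := gr c Cc.
  exists (j h), (mul (inv (j h)) (mul u (j h))); split.
  + by exists h.
  + exact: conj.
  + by rewrite (mulVK HG).
- move=> x y Cx Cy Cxy.
  have [m [u [em U'u e]]] := hom y x Cy Cx Cxy.
  rewrite /= in em; subst m.
  exists (mul (j x) (j y)), (mul (inv (mul (j x) (j y))) (mul u (mul (j x) (j y)))).
  split => //; first exact: conj.
  by rewrite /= e (mulVK HG).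
Qed.
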